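(* Let $n\ge1$, $a>0$, $d>0$, and $t\ge a+d$. Then for every $f\in\mathcal{E}_n^-$, $$|f(t)| \le \left(\frac{2e(t-a)}{d}\right)^n\|f\|_{[a,a+d]} \le \left(\frac{2et}{d}\right)^n\|f\|_{[a,a+d]}.$$
   Context: $\mathcal{E}_n^-$ denotes the set of all functions $f(t)=\sum_{j=1}^na_je^{\lambda_jt}$ ($t\in\mathbb{R}$) with $a_j,\lambda_j\in\mathbb{C}$ and $\mathrm{Re}(\lambda_j)\le0$ for all $j$. $\|f\|_{[a,a+d]}:=\sup_{s\in[a,a+d]}|f(s)|$. *)

(* Defs.v *)
From Stdlib Require Import Reals.
Open Scope R_scope.

Definition Cplx := (R * R)%type.

Definition Cadd (z w : Cplx) : Cplx := (fst z + fst w, snd z + snd w).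
Definition Cmul (z w : Cplx) : Cplx :=
  (fst z * fst w - snd z * snd w, fst z * snd w + snd z * fst w).
Definition Cmod (z : Cplx) : R := sqrt (fst z ^ 2 + snd z ^ 2).
Definition Cexp_lin (lam : Cplx) (t : R) : Cplx :=
  (exp (fst lam * t) * cos (snd lam * t), exp (fst lam * t) * sin (snd lam * t)).

(* sum_{j=0}^{n-1} a_j e^{lam_j t}  (indices shifted from 1..n to 0..n-1) *)
Fixpoint expsum (n : nat) (a lam : nat -> Cplx) (t : R) : Cplx :=
  match n with
  | O => (0, 0)
  | S m => Cadd (expsum m a lam t) (Cmul (a m) (Cexp_lin (lam m) t))
  end.

Definition in_En_minus (n : nat) (f : R -> Cplx) : Prop :=
  exists a lam : nat -> Cplx,
    (forall j, (j < n)%nat -> fst (lam j) <= 0) /\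
    (forall t, f t = expsum n a lam t).

Definition is_supnorm (f : R -> Cplx) (a d N : R) : Prop :=
  is_lub (fun y => exists s, a <= s <= a + d /\ y = Cmod (f s)) N.

(* Main.v *)
Require Import Defs.
From Stdlib Require Import Reals Lra Lia.
From Coquelicot Require Import Complex.
Open Scope R_scope.

Lemma exp_mono x y : x <= y -> exp x <= exp y.
Proof. intros H; destruct (Rle_lt_or_eq_dec _ _ H) as [H'|H'].
  left; now apply exp_increasing. subst; lra. Qed.

Lemma cmod_nn z : 0 <= Defs.Cmod z.
Proof. unfold Defs.Cmod; apply sqrt_pos. Qed.

Lemma cmod_mul z w : Defs.Cmod (Cmul z w) = Defs.Cmod z * Defs.Cmod w.
Proof. exact (Cmod_mult z w). Qed.

Lemma cmod_add z w : Defs.Cmod (Cadd z w) <= Defs.Cmod z + Defs.Cmod w.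
Proof. exact (Cmod_triangle z w). Qed.

Definition Cneg (z : Cplx) : Cplx := (- fst z, - snd z).

Lemma cmod_neg z : Defs.Cmod (Cneg z) = Defs.Cmod z.
Proof. unfold Defs.Cmod, Cneg; simpl; f_equal; ring. Qed.

Lemma cmod_exp l t : Defs.Cmod (Cexp_lin l t) = exp (fst l * t).
Proof.
  unfold Defs.Cmod, Cexp_lin; cbn [fst snd].
  replace ((exp (fst l * t) * cos (snd l * t)) ^ 2 + (exp (fst l * t) * sin (snd l * t)) ^ 2)
    with (exp (fst l * t) ^ 2).
  - apply sqrt_pow2. left; apply exp_pos.
  - rewrite <- (Rmult_1_r (exp (fst l * t) ^ 2)). rewrite <- (sin2_cos2 (snd l * t)).
    unfold Rsqr; ring.
Qed.

Lemma cexp_plus l u h : Cexp_lin l (u + h) = Cmul (Cexp_lin l h) (Cexp_lin l u).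
Proof.
  unfold Cexp_lin, Cmul; simpl.
  replace (fst l * (u + h)) with (fst l * h + fst l * u) by ring.
  replace (snd l * (u + h)) with (snd l * h + snd l * u) by ring.
  rewrite exp_plus, cos_plus, sin_plus. f_equal; ring.
Qed.

Lemma expsum_shift a lam z h u m :
  expsum m (fun j => Cmul (a j) (Cadd (Cexp_lin (lam j) h) (Cneg z))) lam u =
  Cadd (expsum m a lam (u + h)) (Cneg (Cmul z (expsum m a lam u))).
Proof.
  induction m as [|m IH]; simpl.
  - unfold Cadd, Cneg, Cmul; simpl; f_equal; ring.
  - rewrite IH, cexp_plus.
    destruct (expsum m a lam (u + h)) as [p1 p2].
    destruct (expsum m a lam u) as [q1 q2].
    destruct (a m) as [a1 a2]. destruct (Cexp_lin (lam m) h) as [e1 e2].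
    destruct (Cexp_lin (lam m) u) as [f1 f2]. destruct z as [z1 z2].
    unfold Cadd, Cneg, Cmul; simpl; f_equal; ring.
Qed.

Lemma expsum_last m a lam u h :
  expsum (S m) (fun j => Cmul (a j) (Cadd (Cexp_lin (lam j) h) (Cneg (Cexp_lin (lam m) h)))) lam u =
  expsum m (fun j => Cmul (a j) (Cadd (Cexp_lin (lam j) h) (Cneg (Cexp_lin (lam m) h)))) lam u.
Proof.
  change (expsum (S m) ?A lam u) with (Cadd (expsum m A lam u) (Cmul (A m) (Cexp_lin (lam m) u))).
  cbv beta.
  destruct (expsum m _ lam u) as [p q].
  destruct (Cexp_lin (lam m) h) as [e1 e2]. destruct (a m). destruct (Cexp_lin (lam m) u).
  unfold Cadd, Cmul, Cneg; simpl; f_equal; ring.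
Qed.

Fixpoint ssum (F : nat -> R) (K : nat) : R :=
  match K with O => 0 | S k => ssum F k + F k end.

Lemma tele (F G : nat -> R) K :
  (forall k, (k < K)%nat -> F k <= G k - G (S k)) -> ssum F K <= G O - G K.
Proof.
  induction K as [|K IH]; intros H; simpl. lra.
  assert (H1 := IH (fun k Hk => H k ltac:(lia))). assert (H2 := H K ltac:(lia)). lra.
Qed.

Lemma bern n x h : 0 <= x -> 0 <= h ->
  x ^ S n + INR (S n) * h * x ^ n <= (x + h) ^ S n.
Proof.
  intros Hx Hh. induction n as [|n IH].
  - simpl; lra.
  - assert (P1 : 0 <= x ^ n) by (apply pow_le; lra).
    assert (P2 : 0 <= x + h) by lra.
    change ((x + h) ^ S (S n)) with ((x + h) * (x + h) ^ S n).
    apply Rle_trans with ((x + h) * (x ^ S n + INR (S n) * h * x ^ n)).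
    + rewrite (S_INR (S n)). change (x ^ S (S n)) with (x * (x * x ^ n)).
      change (x ^ S n) with (x * x ^ n).
      assert (0 <= INR (S n)) by apply pos_INR.
      assert (0 <= h * h * x ^ n) by (apply Rmult_le_pos; [nra|lra]).
      nra.
    + apply Rmult_le_compat_l; lra.
Qed.

Lemma exp_pow x n : exp x ^ n = exp (INR n * x).
Proof.
  induction n as [|n IH]. simpl. rewrite Rmult_0_l, exp_0; ring.
  simpl pow. rewrite IH, S_INR, <- exp_plus. f_equal; ring.
Qed.

Lemma e_bound n : (1 <= n)%nat -> (1 + / INR n) ^ n <= exp 1.
Proof.
  intros Hn. assert (Hp : 0 < INR n) by (apply lt_0_INR; lia).
  apply Rle_trans with (exp (/ INR n) ^ n).
  - apply pow_incr. split. assert (0 < / INR n) by (apply Rinv_0_lt_compat; lra). lra.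
    left; apply exp_ineq1. apply Rgt_not_eq, Rinv_0_lt_compat; lra.
  - rewrite exp_pow. right; f_equal; field; lra.
Qed.

Lemma exists_K h x : 0 < h -> 0 <= x -> exists K : nat, INR K * h <= x <= INR K * h + h.
Proof.
  intros Hh Hx. destruct (INR_archimed h x Hh) as [m Hm].
  assert (G : forall m x, 0 <= x <= INR m * h -> exists K : nat, INR K * h <= x <= INR K * h + h).
  { clear Hm Hx m x. induction m as [|m IH]; intros x Hx.
    - exists O. simpl in *. lra.
    - destruct (Rle_dec x (INR m * h)) as [H|H].
      + apply IH; lra.
      + exists m. rewrite S_INR in Hx. lra. }
  apply (G m); lra.
Qed.

Lemma main n : (1 <= n)%nat -> forall f a d M s,
  in_En_minus n f -> 0 < d -> (forall u, a <= u <= a + d -> Defs.Cmod (f u) <= M) ->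
  a + d <= s -> Defs.Cmod (f s) <= (2 * exp 1 * (s - a) / d) ^ n * M.
Proof.
  assert (He : 1 < exp 1) by (generalize (exp_ineq1 1 ltac:(lra)); lra).
  induction n as [|n IH]; intros Hn f a d M s Hf Hd HM Hs. lia.
  assert (HM0 : 0 <= M) by (apply Rle_trans with (Defs.Cmod (f a)); [apply cmod_nn|apply HM; lra]).
  destruct Hf as [c [lam [Hlam Hfe]]].
  destruct n as [|nn].
  -
    assert (Hfs : forall u, Defs.Cmod (f u) = Defs.Cmod (c O) * exp (fst (lam O) * u)).
    { intros u. rewrite Hfe. simpl. rewrite <- cmod_exp, <- cmod_mul.
      unfold Defs.Cmod, Cadd; simpl. f_equal; ring. }
    assert (Hx := Hlam O ltac:(lia)).
    assert (Hb : Defs.Cmod (f s) <= M).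
    { apply Rle_trans with (Defs.Cmod (f (a + d))); [|apply HM; lra].
      rewrite !Hfs. apply Rmult_le_compat_l. apply cmod_nn. apply exp_mono. nra. }
    assert (1 <= (2 * exp 1 * (s - a) / d)).
    { apply Rmult_le_reg_r with d; auto. unfold Rdiv. rewrite Rmult_assoc, Rinv_l by lra. nra. }
    simpl. nra.
  -
    set (m := S nn) in *.
    assert (Hm : 0 < INR m) by (apply lt_0_INR; unfold m; lia).
    assert (Hm1 : 1 <= INR m) by (unfold m; rewrite S_INR; generalize (pos_INR nn); lra).
    set (h := d / INR (S m)).
    assert (HSm : INR (S m) = INR m + 1) by apply S_INR.
    assert (Hh : 0 < h) by (unfold h; apply Rdiv_lt_0_compat; lra).
    set (d' := d - h).
    assert (Hd'e : d' = d * INR m / INR (S m)) by (unfold d', h; rewrite HSm; field; lra).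
    assert (Hd' : 0 < d') by (rewrite Hd'e; apply Rdiv_lt_0_compat; nra).
    set (z := Cexp_lin (lam m) h).
    assert (Hz : Defs.Cmod z <= 1).
    { unfold z; rewrite cmod_exp. rewrite <- exp_0. apply exp_mono.
      assert (fst (lam m) <= 0) by (apply Hlam; lia). nra. }
    set (g := fun u => Cadd (f (u + h)) (Cneg (Cmul z (f u)))).
    assert (Hg : in_En_minus m g).
    { exists (fun j => Cmul (c j) (Cadd (Cexp_lin (lam j) h) (Cneg z))), lam. split.
      - intros j Hj; apply Hlam; lia.
      - intros u. unfold g. rewrite !Hfe. rewrite <- expsum_shift.
        unfold z. rewrite expsum_last. reflexivity. }
    assert (Hgb : forall u, a <= u <= a + d' -> Defs.Cmod (g u) <= 2 * M).
    { intros u Hu. unfold g. eapply Rle_trans; [apply cmod_add|].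
      rewrite cmod_neg, cmod_mul.
      assert (Defs.Cmod (f (u + h)) <= M) by (apply HM; unfold d' in Hu; lra).
      assert (Defs.Cmod (f u) <= M) by (apply HM; unfold d' in Hu; lra).
      assert (0 <= Defs.Cmod z) by apply cmod_nn.
      assert (0 <= Defs.Cmod (f u)) by apply cmod_nn. nra. }
    set (q := 2 * exp 1 / d').
    assert (IHg : forall u, a + d' <= u -> Defs.Cmod (g u) <= 2 * M * q ^ m * (u - a) ^ m).
    { intros u Hu. eapply Rle_trans.
      apply (IH ltac:(unfold m; lia) g a d' (2 * M) u Hg Hd' Hgb Hu).
      right. replace (2 * exp 1 * (u - a) / d') with (q * (u - a)) by (unfold q; field; lra).
      rewrite Rpow_mult_distr. ring. }
    assert (Tel : forall K, Defs.Cmod (f s) <=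
        ssum (fun k => Defs.Cmod (g (s - INR (S k) * h))) K + Defs.Cmod (f (s - INR K * h))).
    { induction K as [|K IHK].
      - change (ssum ?F 0) with 0. simpl INR. replace (s - 0 * h) with s by ring. lra.
      - change (ssum ?F (S K)) with (ssum F K + F K); cbv beta.
        eapply Rle_trans; [apply IHK|].
        assert (E : f (s - INR K * h) = Cadd (g (s - INR (S K) * h)) (Cmul z (f (s - INR (S K) * h)))).
        { unfold g. replace (s - INR (S K) * h + h) with (s - INR K * h) by (rewrite S_INR; ring).
          destruct (f (s - INR K * h)), (Cmul z (f (s - INR (S K) * h))).
          unfold Cadd, Cneg; simpl; f_equal; ring. }
        assert (B : Defs.Cmod (f (s - INR K * h)) <= Defs.Cmod (g (s - INR (S K) * h)) + Defs.Cmod (f (s - INR (S K) * h))).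
        { rewrite E at 1. eapply Rle_trans. apply cmod_add.
          rewrite cmod_mul.
          assert (0 <= Defs.Cmod z) by apply cmod_nn.
          assert (0 <= Defs.Cmod (f (s - INR (S K) * h))) by apply cmod_nn.
          nra. }
        lra. }
    destruct (exists_K h (s - a - d') Hh ltac:(unfold d'; lra)) as [K [HK1 HK2]].
    set (C := 2 * M * q ^ m / d).
    assert (HqP : 0 < q) by (unfold q; apply Rdiv_lt_0_compat; lra).
    assert (HC : 0 <= C).
    { unfold C. apply Rmult_le_pos; [|left; apply Rinv_0_lt_compat; lra].
      apply Rmult_le_pos; [lra|]. apply pow_le; lra. }
    assert (Hsum : ssum (fun k => Defs.Cmod (g (s - INR (S k) * h))) K <=
       C * (s - a) ^ S m - C * (s - INR K * h - a) ^ S m).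
    { replace (C * (s - a) ^ S m) with (C * (s - INR O * h - a) ^ S m) by (simpl INR; f_equal; f_equal; ring).
      apply (tele _ (fun k => C * (s - INR k * h - a) ^ S m)).
      intros k Hk.
      set (x := s - INR (S k) * h - a).
      assert (Hkx : INR (S k) <= INR K) by (apply le_INR; lia).
      assert (Hx : d' <= x) by (unfold x; nra).
      replace (s - INR k * h - a) with (x + h) by (unfold x; rewrite S_INR; ring).
      eapply Rle_trans. apply IHg. unfold x in Hx; lra.
      replace (s - INR (S k) * h - a) with x by reflexivity.
      assert (B := bern m x h ltac:(lra) ltac:(lra)).
      assert (Hd2 : d = INR (S m) * h) by (unfold h; field; lra).
      unfold C. rewrite Hd2.
      assert (0 <= 2 * M * q ^ m) by (apply Rmult_le_pos; [lra| apply pow_le; lra]).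
      apply Rmult_le_reg_r with (INR (S m) * h). nra.
      replace ((2 * M * q ^ m / (INR (S m) * h) * (x + h) ^ S m -
                2 * M * q ^ m / (INR (S m) * h) * x ^ S m) * (INR (S m) * h))
        with (2 * M * q ^ m * ((x + h) ^ S m - x ^ S m)) by (field; nra).
      replace (2 * M * q ^ m * x ^ m * (INR (S m) * h)) with
        (2 * M * q ^ m * (INR (S m) * h * x ^ m)) by ring.
      apply Rmult_le_compat_l; lra. }
    assert (Hlast : Defs.Cmod (f (s - INR K * h)) <= M) by (apply HM; unfold d' in *; lra).
    assert (Hy : d' ^ S m <= (s - INR K * h - a) ^ S m) by (apply pow_incr; lra).
    assert (Hqd : q * d' = 2 * exp 1) by (unfold q; field; lra).
    assert (H2e : 1 <= (2 * exp 1) ^ m) by (apply pow_R1_Rle; lra).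
    assert (HCd : M <= C * d' ^ S m).
    { unfold C. replace (2 * M * q ^ m / d * d' ^ S m) with (2 * M * (q * d') ^ m * (d' / d))
        by (rewrite Rpow_mult_distr; simpl pow; field; lra).
      rewrite Hqd. replace (d' / d) with (INR m / INR (S m)) by (rewrite Hd'e; field; lra).
      assert (1/2 <= INR m / INR (S m)).
      { rewrite HSm. unfold Rdiv. apply Rmult_le_reg_r with (INR m + 1); [lra|].
        replace (INR m * / (INR m + 1) * (INR m + 1)) with (INR m) by (field; lra). lra. }
      assert (1 <= 2 * (2 * exp 1) ^ m * (INR m / INR (S m))) by nra.
      assert (M * 1 <= M * (2 * (2 * exp 1) ^ m * (INR m / INR (S m)))) by (apply Rmult_le_compat_l; lra).
      lra. }
    assert (HCb : C <= M * (2 * exp 1 / d) ^ S m).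
    { unfold C.
      replace q with ((2 * exp 1 / d) * (1 + / INR m)) by (unfold q; rewrite Hd'e, HSm; field; lra).
      rewrite Rpow_mult_distr.
      assert (E1 := e_bound m ltac:(unfold m; lia)).
      assert (0 <= (2 * exp 1 / d) ^ m) by (apply pow_le; left; apply Rdiv_lt_0_compat; lra).
      change ((2 * exp 1 / d) ^ S m) with ((2 * exp 1 / d) * (2 * exp 1 / d) ^ m).
      replace (2 * M * ((2 * exp 1 / d) ^ m * (1 + / INR m) ^ m) / d) with
        ((2 * M * (2 * exp 1 / d) ^ m / d) * (1 + / INR m) ^ m) by (field; lra).
      replace (M * (2 * exp 1 / d * (2 * exp 1 / d) ^ m)) with
        ((2 * M * (2 * exp 1 / d) ^ m / d) * exp 1) by (field; lra).
      apply Rmult_le_compat_l; [|lra].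
      apply Rmult_le_pos; [nra| left; apply Rinv_0_lt_compat; lra]. }
    assert (Hsa : 0 <= (s - a) ^ S m) by (apply pow_le; lra).
    replace (2 * exp 1 * (s - a) / d) with ((2 * exp 1 / d) * (s - a)) by (field; lra).
    rewrite Rpow_mult_distr.
    assert (T := Tel K).
    assert (C * (s - a) ^ S m <= M * (2 * exp 1 / d) ^ S m * (s - a) ^ S m)
      by (apply Rmult_le_compat_r; lra).
    assert (C * d' ^ S m <= C * (s - INR K * h - a) ^ S m) by (apply Rmult_le_compat_l; lra).
    nra.
Qed.

Theorem lemma12p2 (n : nat) (a d t : R) (f : R -> Cplx) (N : R) :
  (1 <= n)%nat -> 0 < a -> 0 < d -> a + d <= t ->
  in_En_minus n f -> is_supnorm f a d N ->
  Cmod (f t) <= (2 * exp 1 * (t - a) / d) ^ n * N /\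
  (2 * exp 1 * (t - a) / d) ^ n * N <= (2 * exp 1 * t / d) ^ n * N.
Proof.
  intros Hn Ha Hd Ht Hf [Hub Hlub].
  assert (HM : forall u, a <= u <= a + d -> Defs.Cmod (f u) <= N).
  { intros u Hu. apply Hub. exists u; split; auto. }
  assert (HN0 : 0 <= N) by (apply Rle_trans with (Defs.Cmod (f a)); [apply cmod_nn| apply HM; lra]).
  split.
  - exact (main n Hn f a d N t Hf Hd HM Ht).
  - apply Rmult_le_compat_r; auto. apply pow_incr.
    assert (1 < exp 1) by (generalize (exp_ineq1 1 ltac:(lra)); lra).
    split.
    + left; apply Rdiv_lt_0_compat; nra.
    + unfold Rdiv. apply Rmult_le_compat_r. left; apply Rinv_0_lt_compat; lra. nra.
Qed.
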